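(* Let $\pi$ be a set of primes, $G$ a finite group with the property $C_\pi$, $A$ a normal subgroup of $G$ and $H$ a $\pi$-Hall subgroup of $G$. Then both $N_G(HA)$ and $N_G(H\cap A)$ have the property $C_\pi$.
   Context: All groups are finite. A subgroup $H$ of $G$ is a $\pi$-Hall subgroup if all prime divisors of $|H|$ lie in $\pi$ and no prime divisor of $|G:H|$ lies in $\pi$. $G$ has the property $E_\pi$ if it contains a $\pi$-Hall subgroup; $G$ has the property $C_\pi$ if it has $E_\pi$ and any two $\pi$-Hall subgroups of $G$ are conjugate in $G$. *)

(* Defs.v *)
From mathcomp Require Import all_boot all_fingroup all_solvable.
Set Implicit Arguments. Unset Strict Implicit. Unset Printing Implicit Defensive.
Local Open Scope group_scope.

Definition E_prop (gT : finGroupType) (pi : nat_pred) (G : {group gT}) : Prop :=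
  exists H : {group gT}, pi.-Hall(G) H.

Definition C_prop (gT : finGroupType) (pi : nat_pred) (G : {group gT}) : Prop :=
  E_prop pi G /\
  forall H K : {group gT}, pi.-Hall(G) H -> pi.-Hall(G) K ->
    exists2 x, x \in G & K :=: H :^ x.

(* Main.v *)
Require Import Defs.
From mathcomp Require Import all_boot all_fingroup all_solvable.
Set Implicit Arguments. Unset Strict Implicit.
Local Open Scope group_scope.

Lemma hall_trans (gT : finGroupType) pi (G M H K : {group gT}) :
  H \subset M -> M \subset G -> pi.-Hall(G) H -> pi.-Hall(M) K -> pi.-Hall(G) K.
Proof.
move=> sHM sMG hH hK; rewrite pHallE (subset_trans (pHall_sub hK) sMG) /=.
by rewrite (card_Hall hK) -(card_Hall (pHall_subl sHM sMG hH)) (card_Hall hH).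
Qed.

Lemma C_sub (gT : finGroupType) pi (G M H : {group gT}) :
  C_prop pi G -> pi.-Hall(G) H -> H \subset M -> M \subset G ->
  (forall g, g \in G -> H :^ g \subset M -> g \in M) -> C_prop pi M.
Proof.
move=> [_ CG] hH sHM sMG cl; split; first by exists H; exact: pHall_subl hH.
move=> H1 K hH1 hK.
have gH1 := hall_trans sHM sMG hH hH1; have gK := hall_trans sHM sMG hH hK.
have [a aG eH1] := CG _ _ hH gH1; have [b bG eK] := CG _ _ hH gK.
have aM : a \in M by apply: cl => //; rewrite -eH1 (pHall_sub hH1).
have bM : b \in M by apply: cl => //; rewrite -eK (pHall_sub hK).
exists (a^-1 * b); first by rewrite groupM ?groupV.
by rewrite eK eH1 -conjsgM mulgA mulgV mul1g.
Qed.

Theorem lemma5 (gT : finGroupType) (pi : nat_pred) (G A H : {group gT}) :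
  C_prop pi G -> A <| G -> pi.-Hall(G) H ->
  C_prop pi 'N_G(H * A)%G /\ C_prop pi 'N_G(H :&: A)%G.
Proof.
move=> CG nsAG hH.
have sHG := pHall_sub hH; have [sAG nAG] := andP nsAG.
have nAH : H \subset 'N(A) := subset_trans sHG nAG.
have Ag : forall g, g \in G -> A :^ g = A by move=> g gG; apply: (normsP nAG).
split.
  have eHA : H * A = H <*> A by rewrite norm_joinEl.
  have e2 : 'N_G(H * A)%G = 'N_G(H <*> A)%G by apply: val_inj; rewrite /= eHA.
  rewrite e2; set L := H <*> A.
  have sHL : H \subset L by rewrite joing_subl.
  have sAL : A \subset L by rewrite joing_subr.
  have sLG : L \subset G by rewrite join_subG sHG.
  apply: (C_sub CG hH) => //.
  - by rewrite subsetI sHG; apply: normsG.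
  - exact: subsetIl.
  move=> g gG; rewrite subsetI => /andP[_ nLK].
  have hK : pi.-Hall(G) (H :^ g) by rewrite pHallJ.
  have sKG := pHall_sub hK.
  have sKL : H :^ g \subset L.
    set K := (H :^ g)%G.
    have eM : K <*> L = K * L :> {set gT} by rewrite norm_joinEl.
    have sML : K <*> L \subset G by rewrite join_subG sKG.
    have hKM : pi.-Hall(K <*> L) K := pHall_subl (joing_subl _ _) sML hK.
    have hHL : pi.-Hall(L) H := pHall_subl sHL sLG hH.
    have := mul_cardG K L; rewrite -eM => eC.
    have := congr1 (fun n => n`_pi)%N eC.
    rewrite !partnM ?cardG_gt0 //.
    rewrite -(card_Hall hKM) -(card_Hall hHL) (part_pnat_id (pHall_pgroup hK)).
    rewrite (part_pnat_id (pgroupS (subsetIl K L) (pHall_pgroup hK))).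
    move/eqP; rewrite eqn_mul2l (negbTE (lt0n_neq0 (cardG_gt0 K))) /= => /eqP e3.
    have : K :&: L :==: K by rewrite eqEcard subsetIl -e3 /K cardJg leqnn.
    by move/eqP <-; apply: subsetIr.
  rewrite inE gG /=; apply/normP; apply/eqP.
  by rewrite eqEcard cardJg leqnn andbT conjYg Ag // join_subG sKL sAL.
set I := (H :&: A)%G.
have sIH : I \subset H := subsetIl H A.
have sIG : I \subset G := subset_trans sIH sHG.
apply: (C_sub CG hH) => //.
- by rewrite subsetI sHG /I normsI ?normG.
- exact: subsetIl.
move=> g gG; rewrite subsetI => /andP[_ nIK].
have hK : pi.-Hall(G) (H :^ g) by rewrite pHallJ.
set K := (H :^ g)%G.
have sKG : K \subset G := pHall_sub hK.
have eM : I <*> K = I * K :> {set gT} by rewrite norm_joinEr.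
have piM : pi.-group (I <*> K).
  by rewrite eM pgroupM (pgroupS sIH (pHall_pgroup hH)) (pHall_pgroup hK).
have sMG : I <*> K \subset G by rewrite join_subG sIG.
have eMK := sub_pHall hK piM (joing_subr _ _) sMG.
have sIK : I \subset K by rewrite -eMK joing_subl.
have sIKA : I \subset I :^ g by rewrite /I conjIg Ag // subsetI sIK subsetIr.
have eI : I :^ g = I.
  by apply/eqP; rewrite eq_sym eqEcard sIKA cardJg leqnn.
by rewrite inE gG /=; apply/normP.
Qed.
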